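(* Let $v\ge2$, $\epsilon>0$ and $k\in\{1,\dots,v-1\}$. Then $k\in K_{opt}(v,\epsilon)$ if and only if $$E(k,k+1;v)\le e^\epsilon\le E(k-1,k;v).$$ Moreover, if $e^\epsilon=E(k,k+1;v)$ for some $k$, then $K_{opt}(v,\epsilon)=\{k,k+1\}$; otherwise $K_{opt}(v,\epsilon)$ is a singleton.
   Context: $K_{opt}(v,\epsilon)$ is the set of integers $k\in\{1,\dots,v-1\}$ minimizing $\frac{(ke^\epsilon+v-k)^2}{k(v-k)}$. For integers $0\le k_1<k_2\le v$ with $(k_1,k_2)\ne(0,v)$, $E(k_1,k_2;v)=\sqrt{\frac{(v-k_1)(v-k_2)}{k_1k_2}}$ when $k_1\ge1$, and $E(0,k_2;v):=\infty$. *)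

(* Defs.v *)
From HB Require Import structures.
From mathcomp Require Import all_boot all_order all_algebra.
From mathcomp Require Import all_classical all_reals all_analysis.
Set Implicit Arguments. Unset Strict Implicit. Unset Printing Implicit Defensive.
Import Order.TTheory GRing.Theory Num.Theory.
Local Open Scope classical_set_scope.
Local Open Scope ring_scope.

Definition kobj {R : realType} (v : nat) (eps : R) (k : nat) : R :=
  (k%:R * expR eps + (v - k)%:R) ^+ 2 / (k%:R * (v - k)%:R).

Definition Kopt {R : realType} (v : nat) (eps : R) : set nat :=
  [set k | (1 <= k <= v.-1)%N /\
           forall j, (1 <= j <= v.-1)%N -> kobj v eps k <= kobj v eps j].

Definition Eval {R : realType} (k1 k2 v : nat) : \bar R :=
  if k1 == 0%N then +oo%E
  else (Num.sqrt (((v - k1) * (v - k2))%:R / (k1 * k2)%:R : R))%:E.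

(* Main.v *)
Require Import Defs.
From HB Require Import structures.
From mathcomp Require Import all_boot all_order all_algebra.
From mathcomp Require Import all_classical all_reals all_analysis.
From mathcomp Require Import zify ring lra.
Import Order.TTheory GRing.Theory Num.Theory.
Local Open Scope classical_set_scope.
Local Open Scope ring_scope.

Lemma cmono_gen (R : realType) (c : nat -> R) (n : nat) :
  (forall k, (1 <= k)%N -> (k < n)%N -> c k.+1 < c k) ->
  forall i j, (1 <= i)%N -> (i < j)%N -> (j <= n)%N -> c j < c i.
Proof.
move=> H i j Hi Hij Hjn.
have: forall m, (i + m.+1 <= n)%N -> c (i + m.+1)%N < c i.
  elim=> [|m IH] Hm.
    by rewrite addn1; apply: H => //; lia.
  apply: lt_trans (IH _); last by lia.
  rewrite addnS; apply: H; lia.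
move=> /(_ (j - i.+1)%N).
have -> : (i + (j - i.+1).+1)%N = j by lia.
by apply; lia.
Qed.

Lemma min_char (R : realType) (f c : nat -> R) (b : R) (n : nat) :
 (forall k, (1 <= k)%N -> (k < n)%N -> exists2 p, 0 < p & f k.+1 - f k = p * (b - c k)) ->
 (forall i j, (1 <= i)%N -> (i < j)%N -> (j <= n)%N -> c j < c i) ->
 forall k, (1 <= k <= n)%N ->
 ((forall j, (1 <= j <= n)%N -> f k <= f j) <->
   (((k < n)%N -> c k <= b) /\ ((1 < k)%N -> b <= c k.-1))).
Proof.
move=> Hd Hc k /andP[Hk1 Hkn]; split.
  move=> Hmin; split.
    move=> Hkn'; have := Hmin k.+1 ltac:(lia).
    have [p hp hd] := Hd k Hk1 Hkn'.
    rewrite -subr_ge0 hd pmulr_rge0 //; by rewrite subr_ge0.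
  move=> Hk'; have := Hmin k.-1 ltac:(lia).
  have [p hp hd] := Hd k.-1 ltac:(lia) ltac:(lia).
  rewrite prednK in hd; last by lia.
  rewrite -subr_le0 hd pmulr_rle0 //; by rewrite subr_le0.
move=> [H1 H2] j /andP[Hj1 Hjn].
have [Hjk|Hjk] := leqP k j.
  have: forall m, (k + m <= n)%N -> f k <= f (k + m)%N.
    elim=> [|m IH] Hm; first by rewrite addn0.
    apply: le_trans (IH ltac:(lia)) _.
    have [p hp hd] := Hd (k + m)%N ltac:(lia) ltac:(lia).
    rewrite addnS -subr_ge0 hd pmulr_rge0 // subr_ge0.
    have Hck : c k <= b by apply: H1; lia.
    case: m {IH Hm hd} (Hm) => [|m] Hm; first by rewrite addn0.
    apply/ltW; apply: lt_le_trans Hck; apply: Hc; lia.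
  move=> /(_ (j - k)%N); have -> : (k + (j - k))%N = j by lia.
  by apply; lia.
have: forall m, (m.+1 <= k)%N -> f k <= f (k - m)%N.
  elim=> [|m IH] Hm; first by rewrite subn0.
  apply: le_trans (IH ltac:(lia)) _.
  have [p hp hd] := Hd (k - m.+1)%N ltac:(lia) ltac:(lia).
  have -> : (k - m = (k - m.+1).+1)%N by lia.
  rewrite -subr_le0 hd pmulr_rle0 // subr_le0.
  have Hck : b <= c k.-1 by apply: H2; lia.
  case: m {IH Hm hd} (Hm) => [|m] Hm.
    by have -> : (k - 1 = k.-1)%N by lia.
  apply/ltW; apply: le_lt_trans Hck _; apply: Hc; lia.
move=> /(_ (k - j)%N); have -> : (k - (k - j) = j)%N by lia.
by apply; lia.
Qed.
Definition cc (R : realType) (v k : nat) : R :=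
  ((v - k) * (v - k.+1))%:R / (k * k.+1)%:R.

Lemma kobj_diff (R : realType) (v : nat) (eps : R) (k : nat) :
  (1 <= k)%N -> (k.+1 < v)%N ->
  kobj v eps k.+1 - kobj v eps k =
  (v%:R / ((v - k)%:R * (v - k.+1)%:R)) * (expR eps ^+ 2 - cc R v k).
Proof.
move=> Hk Hkv; rewrite /kobj /cc.
rewrite !natrM !natrB; try lia.
set a := expR eps; set K := k%:R; set V := v%:R.
have hK : K != 0 by rewrite pnatr_eq0; lia.
have hK1 : K + 1 != 0 by rewrite /K natr1 pnatr_eq0; lia.
have hVK : V - K != 0 by rewrite subr_eq0 eqr_nat; lia.
have hVK1 : V - (K + 1) != 0 by rewrite /K natr1 subr_eq0 eqr_nat; lia.
rewrite -!natr1 -/K.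
field.
by rewrite hK hK1 hVK hVK1.
Qed.

Lemma sq_le1 (R : realType) (a x : R) : 0 <= a -> (Num.sqrt x <= a) = (x <= a ^+ 2).
Proof.
move=> ha; have h : Num.sqrt (a ^+ 2) = a by rewrite sqrtr_sqr ger0_norm.
by rewrite -{1}h ler_sqrt // sqr_ge0.
Qed.

Lemma sq_le2 (R : realType) (a x : R) : 0 <= a -> 0 <= x -> (a <= Num.sqrt x) = (a ^+ 2 <= x).
Proof.
move=> ha hx; have h : Num.sqrt (a ^+ 2) = a by rewrite sqrtr_sqr ger0_norm.
by rewrite -{1}h ler_sqrt.
Qed.

Lemma cc_ge0 (R : realType) v k : 0 <= cc R v k.
Proof. by rewrite /cc divr_ge0 // ler0n. Qed.

Lemma cc_last (R : realType) v : (1 <= v)%N -> cc R v v.-1 = 0.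
Proof.
move=> hv; rewrite /cc; have -> : (v - v.-1.+1 = 0)%N by lia.
by rewrite muln0 mul0r.
Qed.

Lemma cc_dec (R : realType) v k : (1 <= k)%N -> (k < v.-1)%N -> cc R v k.+1 < cc R v k.
Proof.
move=> h1 h2; rewrite /cc ltr_pdivrMr; last by rewrite ltr0n; lia.
rewrite mulrAC ltr_pdivlMr; last by rewrite ltr0n; lia.
rewrite -!natrM ltr_nat.
have -> : (v - k = (v - k.+2) + 2)%N by lia.
have -> : (v - k.+1 = (v - k.+2) + 1)%N by lia.
set w := (v - k.+2)%N. nia.
Qed.

Lemma exists_min (R : realType) (f : nat -> R) n : (1 <= n)%N ->
  exists k, (1 <= k <= n)%N /\ forall j, (1 <= j <= n)%N -> f k <= f j.
Proof.
elim: n => [|n IH] // _.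
case: n IH => [|n] IH.
  exists 1%N; split => // j hj; have -> : j = 1%N by lia. by [].
have [m [hm Hm]] := IH isT.
have [hle|hlt] := leP (f m) (f n.+2).
  exists m; split; first by lia.
  move=> j hj; have [hj2|hj2] := eqVneq j n.+2; first by rewrite hj2.
  apply: Hm; lia.
exists n.+2; split; first by lia.
move=> j hj; have [hj2|hj2] := eqVneq j n.+2; first by rewrite hj2.
apply: (ltW (lt_le_trans hlt _)); apply: Hm; lia.
Qed.

Theorem proposition2 (R : realType) (v : nat) (eps : R) :
  (2 <= v)%N -> 0 < eps ->
  (forall k : nat, (1 <= k <= v.-1)%N ->
     (Kopt v eps k <->
      ((@Eval R k k.+1 v <= (expR eps)%:E)%E /\ ((expR eps)%:E <= @Eval R k.-1 k v)%E)))
  /\ (forall k : nat, (1 <= k <= v.-1)%N -> (expR eps)%:E = @Eval R k k.+1 v ->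
        Kopt v eps = [set k; k.+1])
  /\ ((~ exists k : nat, (1 <= k <= v.-1)%N /\ (expR eps)%:E = @Eval R k k.+1 v) ->
        exists j : nat, Kopt v eps = [set j]).
Proof.
move=> hv heps.
set n := v.-1.
set a := expR eps.
have ha : 0 < a by rewrite /a expR_gt0.
set b := a ^+ 2.
have Hd : forall k, (1 <= k)%N -> (k < n)%N -> exists2 p, 0 < p &
    kobj v eps k.+1 - kobj v eps k = p * (b - cc R v k).
  move=> k h1 h2; eexists; last by apply: kobj_diff => //; lia.
  apply: divr_gt0; first by rewrite ltr0n; lia.
  by rewrite -natrM ltr0n muln_gt0; apply/andP; split; lia.
have Hc : forall i j, (1 <= i)%N -> (i < j)%N -> (j <= n)%N -> cc R v j < cc R v i.
  by apply: cmono_gen => k h1 h2; apply: cc_dec.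
have Hchar : forall k, (1 <= k <= n)%N -> (Kopt v eps k <->
    (((k < n)%N -> cc R v k <= b) /\ ((1 < k)%N -> b <= cc R v k.-1))).
  move=> k hk; rewrite -(@min_char _ _ _ _ _ Hd Hc k hk) /Kopt /=.
  by split; [case|split].
have HE : forall k, (1 <= k <= n)%N -> (Eval k k.+1 v = (Num.sqrt (cc R v k))%:E)%E.
  by move=> k hk; rewrite /Eval ifF //; apply/negbTE; lia.
have Hmin2 : forall i j, Kopt v eps i -> Kopt v eps j -> (i < j)%N -> b = cc R v i.
  move=> i j hi hj hij.
  have hbi : (1 <= i <= n)%N by case: hi.
  have hbj : (1 <= j <= n)%N by case: hj.
  have [h1 _] := (Hchar i hbi).1 hi.
  have [_ h2] := (Hchar j hbj).1 hj.
  have h1' := h1 ltac:(lia). have h2' := h2 ltac:(lia).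
  have h3 : cc R v j.-1 <= cc R v i.
    have [e|ne] := eqVneq i j.-1; first by rewrite e.
    apply/ltW; apply: Hc; lia.
  by apply/le_anti; rewrite h1' (le_trans h2').
split.
  move=> k hk.
  have E1 : ((k < n)%N -> cc R v k <= b) <-> (Eval k k.+1 v <= a%:E)%E.
    rewrite HE // lee_fin sq_le1; last exact: ltW.
    split; last by [].
    move=> h; have [hlt|hge] := ltnP k n; first exact: h.
    have -> : k = n by lia.
    by rewrite cc_last ?sqr_ge0 //; lia.
  have E2 : ((1 < k)%N -> b <= cc R v k.-1) <-> (a%:E <= Eval k.-1 k v)%E.
    have [hk1|hk1] := eqVneq k 1%N.
      by rewrite hk1 /Eval /= leey; split.
    rewrite /Eval ifF; last by apply/negbTE; lia.
    rewrite lee_fin sq_le2; [|exact: ltW|by rewrite divr_ge0 // ler0n].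
    rewrite /cc prednK; last by lia.
    by split => [h|h _]; [apply: h; lia|].
  have H := Hchar k hk.
  tauto.
split.
  move=> k hk Heq.
  have hab : b = cc R v k.
    move: Heq; rewrite HE // => -[Heq]; rewrite /b Heq sqr_sqrtr //; exact: cc_ge0.
  have hkn : (k < n)%N.
    rewrite ltn_neqAle; apply/andP; split; last by lia.
    apply/negP => /eqP hkn; move: hab; rewrite hkn cc_last; last by lia.
    by move=> /eqP; rewrite sqrf_eq0 gt_eqF.
  apply/seteqP; split => j /=.
    move=> hj; have hbj : (1 <= j <= n)%N by case: hj.
    have [h1 h2] := (Hchar j hbj).1 hj.
    have [hjk|hjk] := ltnP j k.
      have := h1 ltac:(lia); rewrite hab => h.
      have := Hc j k ltac:(lia) hjk ltac:(lia).
      by rewrite ltNge h.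
    have [hjk2|hjk2] := leqP j k.+1.
      have [e|ne] := eqVneq j k; first by left.
      by right; lia.
    have := h2 ltac:(lia); rewrite hab => h.
    have := Hc k j.-1 ltac:(lia) ltac:(lia) ltac:(lia).
    by rewrite ltNge h.
  move=> [->|->].
    apply/(Hchar k ltac:(lia)); split => hk1; first by rewrite hab.
    rewrite hab; apply/ltW; apply: Hc; lia.
  apply/(Hchar k.+1 ltac:(lia)); split => hk1; last by rewrite hab.
  rewrite hab; apply/ltW; apply: Hc; lia.
move=> Hno.
have [j0 [hj0 Hj0]] := @exists_min _ (kobj v eps) n ltac:(lia).
have Kj0 : Kopt v eps j0 by split.
exists j0; apply/seteqP; split => j /=; last by move=> ->.
move=> Kj; apply/eqP; apply/negP => /eqP hne.
have key : forall i, (1 <= i <= n)%N -> b = cc R v i -> False.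
  move=> i hi hb; apply: Hno; exists i; split => //.
  rewrite HE // -hb /b sqrtr_sqr ger0_norm //; exact: ltW.
have [hlt|hgt] := ltnP j j0.
  apply: (key j); first by case: Kj.
  exact: Hmin2 Kj Kj0 hlt.
have hlt : (j0 < j)%N by lia.
apply: (key j0) => //; exact: Hmin2 Kj0 Kj hlt.
Qed.
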